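(* Let $G$ be a finite group and let $S,S'$ be two partial rainbows on $G$ with $\langle S\rangle=\langle S'\rangle$. Then for each arrow $(K,H)\in S$ there exists $g\in G$ such that $(gKg^{-1},gHg^{-1})\in S'$.
   Context: For a finite group $G$, an arrow is a pair $(K,H)$ of subgroups with $K\leqslant H$; it is an identity arrow if $K=H$. A $G$-transfer system is a set of arrows containing all identity arrows and closed under composition ($(A,B),(B,C)\Rightarrow(A,C)$), conjugation ($(A,B)\Rightarrow(gAg^{-1},gBg^{-1})$ for $g\in G$) and restriction ($(A,B)$ and $L\leqslant B\Rightarrow(A\cap L,L)$). For a set $S$ of non-identity arrows, $\langle S\rangle$ is the smallest transfer system containing $S$. For a subgroup $K$, $P(K)$ denotes the sum of the exponents in the prime factorization of $|K|$. A rainbow on $\mathbb{N}$ is a finite set of pairs $\{(a_i,b_i)\}_{0\leqslant i\leqslant k}$ of natural numbers such that $i<j$ implies $a_i<a_j<b_j<b_i$. A partial rainbow on $G$ is a set $S$ of non-identity arrows such that (1) the set $\{(P(K),P(H)) : (K,H)\in S\}$ is a rainbow, and (2) for any $g\in G$ and $(K,H)\in S$, if $(gKg^{-1},gHg^{-1})\neq(K,H)$ then $(gKg^{-1},gHg^{-1})\notin S$. *)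

(* Defs.v *)
From mathcomp Require Import all_boot all_fingroup.
Set Implicit Arguments.
Unset Strict Implicit.
Unset Printing Implicit Defensive.
Local Open Scope group_scope.

Section TransferSystems.
Variable gT : finGroupType.

Definition arrow := ({group gT} * {group gT})%type.

Definition is_arrow (G : {set gT}) (a : arrow) : bool :=
  (a.1 \subset a.2) && (a.2 \subset G).

(* (g K g^-1, g H g^-1); note that in MathComp  K :^ x = x^-1 K x. *)
Definition conj_arrow (a : arrow) (g : gT) : arrow :=
  ((a.1 :^ g^-1)%G, (a.2 :^ g^-1)%G).

Definition transfer_system (G : {group gT}) (T : {set arrow}) : bool :=
  [&& [forall a in T, is_arrow G a],
      [forall H : {group gT}, (H \subset G) ==> ((H, H) \in T)],
      [forall a in T, forall b in T, (a.2 == b.1) ==> ((a.1, b.2) \in T)],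
      [forall a in T, forall g in G, conj_arrow a g \in T] &
      [forall a in T, forall L : {group gT},
          (L \subset a.2) ==> (((a.1 :&: L)%G, L) \in T)]].

Definition gen_transfer (G : {group gT}) (S : {set arrow}) : {set arrow} :=
  [set a | [forall T : {set arrow},
             (transfer_system G T && (S \subset T)) ==> (a \in T)]].

Definition Pexp (K : {set gT}) : nat :=
  (\sum_(p <- primes #|K|) logn p #|K|)%N.

Definition rainbow_seq (r : seq (nat * nat)) : Prop :=
  forall i j, i < j -> j < size r ->
    [/\ (nth (0,0) r i).1 < (nth (0,0) r j).1,
        (nth (0,0) r j).1 < (nth (0,0) r j).2 &
        (nth (0,0) r j).2 < (nth (0,0) r i).2].

Definition rainbow (X : pred (nat * nat)) : Prop :=
  exists r : seq (nat * nat), rainbow_seq r /\ forall x, X x <-> x \in r.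

Definition partial_rainbow (G : {group gT}) (S : {set arrow}) : Prop :=
  [/\ (forall a, a \in S -> is_arrow G a /\ a.1 != a.2),
      rainbow (fun x => x \in [seq (Pexp (a : arrow).1, Pexp (a : arrow).2) | a : arrow <- enum S]) &
      (forall g a, g \in G -> a \in S ->
          conj_arrow a g != a -> conj_arrow a g \notin S)].

End TransferSystems.

(* Main.v *)
Require Import Defs.
From mathcomp Require Import all_boot all_fingroup.
Local Open Scope group_scope.

Definition Om (n : nat) : nat := (\sum_(p <- primes n) logn p n)%N.

Lemma Om_iota n b : n < b -> Om n = (\sum_(p <- iota 0 b) logn p n)%N.
Proof.
rewrite /Om => nb.
rewrite [RHS](bigID (fun p => p \in primes n)) /=.
rewrite [X in _ = _ + X]big1 ?addn0; last first.
  by move=> p Hp; apply/eqP; rewrite -leqn0 leqNgt logn_gt0.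
rewrite -[RHS]big_filter; apply: perm_big; apply: uniq_perm.
- exact: primes_uniq.
- by rewrite filter_uniq // iota_uniq.
- move=> p; rewrite mem_filter mem_iota /= add0n.
  case E: (p \in primes n) => //=.
  move: E; rewrite mem_primes => /and3P[_ n0 pd].
  by rewrite (leq_ltn_trans (dvdn_leq n0 pd) nb).
Qed.

Lemma OmM m n : 0 < m -> 0 < n -> Om (m * n) = Om m + Om n.
Proof.
move=> m0 n0.
have mb : m < (m * n).+1 by rewrite ltnS leq_pmulr.
have nb : n < (m * n).+1 by rewrite ltnS leq_pmull.
rewrite (@Om_iota _ _ (ltnSn _)) (@Om_iota _ _ mb) (@Om_iota _ _ nb) -big_split.
by apply: eq_bigr => p _; rewrite lognM.
Qed.

Lemma Om_gt0 q : 1 < q -> 0 < Om q.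
Proof.
move=> q1.
have pq : pdiv q \in primes q by rewrite mem_primes pdiv_prime // (ltnW q1) pdiv_dvd.
rewrite /Om (bigD1_seq (pdiv q)) //= ?primes_uniq //.
rewrite -logn_gt0 in pq.
exact: leq_trans pq (leq_addr _ _).
Qed.

Lemma Om_dvd m n : 0 < n -> m %| n -> Om m <= Om n /\ (Om m = Om n -> m = n).
Proof.
move=> n0 /dvdnP[q E]; subst n.
rewrite muln_gt0 in n0; case/andP: n0 => q0 m0.
rewrite OmM // addnC; split; first exact: leq_addr.
move=> /eqP; rewrite -{1}(addn0 (Om m)) eqn_add2l eq_sym => /eqP Hq.
have : q <= 1 by rewrite leqNgt; apply/negP => /Om_gt0; rewrite Hq.
by case: q q0 {Hq} => [|[|]] //; rewrite mul1n.
Qed.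

Lemma rainbow_antichain r x y : rainbow_seq r -> x \in r -> y \in r ->
  x.1 <= y.1 -> x.2 <= y.2 -> x = y.
Proof.
move=> rr xr yr.
have [i ir ex] : exists2 i, i < size r & x = nth (0,0) r i.
  by exists (index x r); [rewrite index_mem | rewrite nth_index].
have [j jr ey] : exists2 j, j < size r & y = nth (0,0) r j.
  by exists (index y r); [rewrite index_mem | rewrite nth_index].
subst x y => h1 h2.
case: (ltngtP i j) => [ij|ji|->] //.
- have [_ _ c] := rr i j ij jr.
  by move: h2; rewrite leqNgt c.
- have [c _ _] := rr j i ji ir.
  by move: h1; rewrite leqNgt c.
Qed.

Section T.
Variable gT : finGroupType.
Implicit Types (G : {group gT}) (S : {set arrow gT}).

Definition Tinv G S : {set arrow gT} :=
  [set a : arrow gT | is_arrow G a && ((a.1 == a.2) ||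
     [exists b in S, exists g in G,
        ((a.1 : {set gT}) \subset b.1 :^ g) && ((a.2 : {set gT}) \subset b.2 :^ g)])].

Lemma Tinv_ts G S : transfer_system G (Tinv G S).
Proof.
apply/and5P; split.
- by apply/forallP => a; apply/implyP; rewrite inE => /andP[].
- by apply/forallP => H; apply/implyP => HG; rewrite inE /is_arrow /= subxx HG eqxx.
- apply/forallP => a; apply/implyP; rewrite inE => /andP[/andP[a12 a2G] ha].
  apply/forallP => b; apply/implyP; rewrite inE => /andP[/andP[b12 b2G] hb].
  apply/implyP => /eqP ab; rewrite inE /is_arrow /= b2G andbT.
  rewrite ab in a12 ha.
  rewrite (subset_trans a12 b12) /=.
  case/orP: hb => [/eqP eb | hb]; first by rewrite -eb.
  apply/orP; right.
  case/existsP: hb => c /andP[cS /existsP[g /andP[gG /andP[h1 h2]]]].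
  apply/existsP; exists c; rewrite cS; apply/existsP; exists g.
  by rewrite gG h2 andbT (subset_trans a12 h1).
- apply/forallP => a; apply/implyP; rewrite inE => /andP[/andP[a12 a2G] ha].
  apply/forallP => g; apply/implyP => gG.
  rewrite inE /is_arrow /conj_arrow /=.
  rewrite conjSg a12 /= sub_conjg invgK (conjGid gG) a2G /=.
  case/orP: ha => [/eqP e | ha]; first by rewrite e eqxx.
  apply/orP; right.
  case/existsP: ha => c /andP[cS /existsP[h /andP[hG /andP[h1 h2]]]].
  apply/existsP; exists c; rewrite cS; apply/existsP; exists (h * g^-1).
  by rewrite groupM ?groupV // !conjsgM !conjSg h1 h2.
- apply/forallP => a; apply/implyP; rewrite inE => /andP[/andP[a12 a2G] ha].
  apply/forallP => L; apply/implyP => La.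
  rewrite inE /is_arrow /= subsetIr (subset_trans La a2G) /=.
  case/orP: ha => [/eqP e | ha].
    apply/orP; left; apply/eqP; apply: val_inj => /=; rewrite e.
    by apply/setIidPr.
  apply/orP; right.
  case/existsP: ha => c /andP[cS /existsP[h /andP[hG /andP[h1 h2]]]].
  apply/existsP; exists c; rewrite cS; apply/existsP; exists h.
  by rewrite hG (subset_trans (subsetIl _ _) h1) (subset_trans La h2).
Qed.

Lemma Tinv_sub G S : (forall a, a \in S -> is_arrow G a) -> S \subset Tinv G S.
Proof.
move=> H; apply/subsetP => a aS; rewrite inE (H a aS) /=.
apply/orP; right; apply/existsP; exists a; rewrite aS; apply/existsP; exists 1.
by rewrite group1 !conjsg1 !subxx.
Qed.

Lemma gen_sub G S T : transfer_system G T -> S \subset T -> gen_transfer G S \subset T.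
Proof.
move=> tsT ST; apply/subsetP => a; rewrite inE => /forallP/(_ T)/implyP; apply.
by rewrite tsT ST.
Qed.

Lemma S_sub_gen G S : S \subset gen_transfer G S.
Proof.
apply/subsetP => a aS; rewrite inE; apply/forallP => T; apply/implyP.
by case/andP => _ /subsetP; apply.
Qed.

Lemma witness G S a : (forall b, b \in S -> is_arrow G b) ->
  a \in gen_transfer G S -> a.1 != a.2 ->
  exists b, exists g, [/\ b \in S, g \in G,
     (a.1 : {set gT}) \subset b.1 :^ g & (a.2 : {set gT}) \subset b.2 :^ g].
Proof.
move=> HS ag ne.
have := subsetP (@gen_sub G S _ (Tinv_ts G S) (@Tinv_sub G S HS)) a ag.
rewrite inE => /andP[_]; rewrite (negbTE ne) /=.
move=> /existsP[b /andP[bS /existsP[g /andP[gG /andP[h1 h2]]]]].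
by exists b, g.
Qed.

End T.

Theorem proposition3p4 (gT : finGroupType) (G : {group gT})
    (S S' : {set arrow gT}) :
  partial_rainbow G S -> partial_rainbow G S' ->
  gen_transfer G S = gen_transfer G S' ->
  forall a, a \in S -> exists2 g, g \in G & conj_arrow a g \in S'.
Proof.
move=> [HS rS _] [HS' rS' _] eqg a aS.
have HSa : forall b, b \in S -> is_arrow G b by move=> b bS; case: (HS b bS).
have HSa' : forall b, b \in S' -> is_arrow G b by move=> b bS; case: (HS' b bS).
have aG : a \in gen_transfer G S' by rewrite -eqg (subsetP (S_sub_gen _ G S)).
have [b [g [bS' gG s1 s2]]] := witness _ _ _ _ HSa' aG (HS a aS).2.
have bG : b \in gen_transfer G S by rewrite eqg (subsetP (S_sub_gen _ G S')).
have [c [h [cS hG t1 t2]]] := witness _ _ _ _ HSa bG (HS' b bS').2.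
exists g => //.
have d1 : #|a.1| %| #|b.1| by rewrite -(cardJg b.1 g); apply: cardSg.
have d2 : #|b.1| %| #|c.1| by rewrite -(cardJg c.1 h); apply: cardSg.
have d3 : #|a.2| %| #|b.2| by rewrite -(cardJg b.2 g); apply: cardSg.
have d4 : #|b.2| %| #|c.2| by rewrite -(cardJg c.2 h); apply: cardSg.
have [o1 o1e] := @Om_dvd _ _ (cardG_gt0 b.1) d1.
have [o2 o2e] := @Om_dvd _ _ (cardG_gt0 c.1) d2.
have [o3 o3e] := @Om_dvd _ _ (cardG_gt0 b.2) d3.
have [o4 o4e] := @Om_dvd _ _ (cardG_gt0 c.2) d4.
case: rS => r [rr hr].
have xa : (Pexp a.1, Pexp a.2) \in r.
  by apply/hr; apply: map_f; rewrite mem_enum.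
have xc : (Pexp c.1, Pexp c.2) \in r.
  by apply/hr; apply: map_f; rewrite mem_enum.
have := @rainbow_antichain _ _ _ rr xa xc (leq_trans o1 o2) (leq_trans o3 o4).
case=> e1 e2.
have E1 : #|a.1| = #|b.1|.
  apply: o1e; apply/eqP; rewrite eqn_leq o1 /=.
  have e1o : Om #|a.1| = Om #|c.1| := e1. by rewrite e1o.
have E2 : #|a.2| = #|b.2|.
  apply: o3e; apply/eqP; rewrite eqn_leq o3 /=.
  have e2o : Om #|a.2| = Om #|c.2| := e2. by rewrite e2o.
have F1 : (a.1 : {set gT}) = b.1 :^ g by apply/eqP; rewrite eqEcard s1 cardJg E1 /=.
have F2 : (a.2 : {set gT}) = b.2 :^ g by apply/eqP; rewrite eqEcard s2 cardJg E2 /=.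
have -> : conj_arrow a g = b.
  rewrite /conj_arrow [b]surjective_pairing; congr (_, _); apply: val_inj => /=.
  - by rewrite F1 conjsgK.
  - by rewrite F2 conjsgK.
exact: bS'.
Qed.
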